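(* Let $\mathcal{R}=(\mathcal{W},\mathcal{R}_1,\mathcal{R}_2)$ be a domino set with $\mathcal{W}=\{1,\dots,m\}$, and let $\mathcal{S}$ be the cyclic triomino set constructed from $\mathcal{R}$ as below (for any fixed $n\ge 2m+1$). Then the $\mathcal{S}$-cyclic triomino problem is solvable if and only if the $\mathcal{R}$-domino problem is solvable.
   Context: A domino set is $\mathcal{R}=(\mathcal{W},\mathcal{R}_1,\mathcal{R}_2)$ with $\mathcal{W}$ non-empty finite and $\mathcal{R}_1,\mathcal{R}_2\subset\mathcal{W}^2$. The $\mathcal{R}$-domino problem is solvable if there is $\mathcal{T}:\mathbb{Z}^2\to\mathcal{W}$ with $(\mathcal{T}(s),\mathcal{T}(s+e_i))\in\mathcal{R}_i$ for all $s\in\mathbb{Z}^2$, $i=1,2$, where $e_1=(1,0)$, $e_2=(0,1)$. Let $u_1=(1,0),u_2=(0,1),u_3=(-1,0),u_4=(0,-1)$, indices mod 4. Regard integers as elements of $\mathbb{Z}_n$. Let $L=\{(w,0,0): w\in\mathcal{W}\}$, $K_1=L\cup\{(0,b,a):(a,b)\in\mathcal{R}_1\}$, $K_2=L\cup\{(0,a,b):(a,b)\in\mathcal{R}_2\}$, $K_3=L\cup\{(0,a,b):(a,b)\in\mathcal{R}_1\}$, $K_4=L\cup\{(0,b,a):(a,b)\in\mathcal{R}_2\}$. Let $\mathcal{V}=\mathbb{Z}_n$, $\mathcal{S}_i=\{(a+k,b+k,c+k):(a,b,c)\in K_i, k\in\mathcal{V}\}$, $\mathcal{S}_{i+4}=\mathcal{S}_i$,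 and $\mathcal{S}=(\mathcal{V},\mathcal{S}_1,\dots,\mathcal{S}_4)$. The $\mathcal{S}$-cyclic triomino problem is solvable if there exists $\mathcal{T}:\mathbb{Z}^2\to\mathcal{V}$ with $(\mathcal{T}(s),\mathcal{T}(s+u_i),\mathcal{T}(s+u_{i+1}))\in\mathcal{S}_i$ for every $s\in\mathbb{Z}^2$ and $1\le i\le 4$. *)

(* Defs.v *)
From mathcomp Require Import all_boot all_order all_algebra.
Set Implicit Arguments. Unset Strict Implicit. Unset Printing Implicit Defensive.
Import GRing.Theory.
Local Open Scope ring_scope.

(* Domino set: W = {1,...,m} (as nats), R1 R2 : rel nat (only pairs in W^2 matter;
   the theorem assumes R1, R2 are subsets of W^2). *)
Definition inW (m : nat) (w : nat) : bool := (1 <= w <= m)%N.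

Definition e (i : nat) : int * int := if i == 1%N then (1, 0) else (0, 1).

Definition vadd (s t : int * int) : int * int := (s.1 + t.1, s.2 + t.2).

Definition domino_solvable (m : nat) (R1 R2 : rel nat) : Prop :=
  exists T : int * int -> nat,
    (forall s, inW m (T s)) /\
    (forall s, R1 (T s) (T (vadd s (e 1)))) /\
    (forall s, R2 (T s) (T (vadd s (e 2)))).

Definition u (i : nat) : int * int :=
  match (i %% 4)%N with
  | 1%N => (1, 0)
  | 2%N => (0, 1)
  | 3%N => (-1, 0)
  | _ => (0, -1)
  end.

(* The sets K_i (triples of naturals, later read in Z_n). *)
Definition Kset (m : nat) (R1 R2 : rel nat) (i : nat) (t : nat * nat * nat) : Prop :=
  let: (x, y, z) := t in
  (inW m x /\ y = 0%N /\ z = 0%N) \/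
  (x = 0%N /\
   match (i %% 4)%N with
   | 1%N => R1 z y
   | 2%N => R2 y z
   | 3%N => R1 y z
   | _ => R2 z y
   end).

(* S_i = {(a+k, b+k, c+k) : (a,b,c) in K_i, k in Z_n}, with V = Z_n = 'I_n;
   an integer x is regarded as the element x mod n. *)
Definition Sset (n m : nat) (R1 R2 : rel nat) (i : nat) (x y z : 'I_n) : Prop :=
  exists a b c k : nat,
    Kset m R1 R2 i (a, b, c) /\
    (x : nat) = ((a + k) %% n)%N /\ (y : nat) = ((b + k) %% n)%N /\
    (z : nat) = ((c + k) %% n)%N.

Definition cyclic_triomino_solvable (n m : nat) (R1 R2 : rel nat) : Prop :=
  exists T : int * int -> 'I_n,
    forall s (i : nat), (1 <= i <= 4)%N ->
      @Sset n m R1 R2 i (T s) (T (vadd s (u i))) (T (vadd s (u i.+1))).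

(* Main.v *)
Require Import Defs.
From mathcomp Require Import all_boot all_order all_algebra intdiv zify ring.
Import GRing.Theory.
Set Implicit Arguments. Unset Strict Implicit. Unset Printing Implicit Defensive.
Local Open Scope ring_scope.

Lemma u1E : u 1 = (1, 0). Proof. by []. Qed.
Lemma u2E : u 2 = (0, 1). Proof. by []. Qed.
Lemma u3E : u 3 = (-1, 0). Proof. by []. Qed.
Lemma u4E : u 4 = (0, -1). Proof. by []. Qed.
Lemma u5E : u 5 = (1, 0). Proof. by []. Qed.
Lemma e1E : e 1 = (1, 0). Proof. by []. Qed.
Lemma e2E : e 2 = (0, 1). Proof. by []. Qed.

Definition diff (n x y : nat) : nat := ((x + (n - y)) %% n)%N.
Definition aboveb (n m : nat) (x y : 'I_n) : bool := inW m (diff n x y).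

Lemma modD_ne (n x d : nat) : (x < n)%N -> (0 < d < n)%N -> ((x + d) %% n)%N = x -> False.
Proof.
move=> xn dn H.
have := eqn_modDl x d 0 n.
rewrite addn0 (modn_small xn) H eqxx mod0n (modn_small (m:=d)); last lia.
by move/esym/eqP => E; move: dn; rewrite E.
Qed.

Lemma above_spec n m (x y : 'I_n) : aboveb m x y -> (x : nat) = ((y + diff n x y) %% n)%N.
Proof.
move=> _; rewrite /diff modnDmr.
have yn := ltn_ord y; have xn := ltn_ord x.
have -> : (y + (x + (n - y)) = x + n)%N by lia.
by rewrite modnDr modn_small.
Qed.

Lemma diff_of n (x y : 'I_n) w : (w < n)%N -> (x : nat) = ((y + w) %% n)%N -> diff n x y = w.
Proof.
move=> wn H; rewrite /diff H modnDml.
have yn := ltn_ord y.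
have -> : (y + w + (n - y) = w + n)%N by lia.
by rewrite modnDr modn_small.
Qed.

Lemma above_antisym n m (x y : 'I_n) : (2 * m + 1 <= n)%N -> aboveb m x y -> aboveb m y x -> False.
Proof.
move=> Hn Hxy Hyx.
have E1 := above_spec Hxy; have E2 := above_spec Hyx.
move: Hxy Hyx; rewrite /aboveb /inW => Hxy Hyx.
move: E1 E2 Hxy Hyx; set d1 := diff n x y; set d2 := diff n y x => E1 E2 Hxy Hyx.
apply: (@modD_ne n x (d2 + d1)) => //; first lia.
have -> : (x + (d2 + d1) = (x + d2) + d1)%N by lia.
by rewrite -modnDml -E2 -E1.
Qed.

Definition relK (R1 R2 : rel nat) (i : nat) (p q : nat) : Prop :=
  match (i %% 4)%N with
  | 1%N => R1 q p
  | 2%N => R2 p q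
  | 3%N => R1 p q
  | _ => R2 q p
  end.

Lemma relK_inW m (R1 R2 : rel nat) i p q :
  (forall a b, R1 a b -> inW m a && inW m b) ->
  (forall a b, R2 a b -> inW m a && inW m b) ->
  relK R1 R2 i p q -> inW m p && inW m q.
Proof.
move=> H1 H2; rewrite /relK; case: (i %% 4)%N => [|[|[|[|k]]]] H.
- by move/H2: H; rewrite andbC.
- by move/H1: H; rewrite andbC.
- exact: H2.
- exact: H1.
- by move/H2: H; rewrite andbC.
Qed.

Lemma Sset_cases n m (R1 R2 : rel nat) (i : nat) (x y z : 'I_n) :
  (forall a b, R1 a b -> inW m a && inW m b) ->
  (forall a b, R2 a b -> inW m a && inW m b) ->
  (2 * m + 1 <= n)%N ->
  Sset m R1 R2 i x y z ->
  (y = z /\ aboveb m x y) \/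
  (aboveb m y x /\ aboveb m z x /\ relK R1 R2 i (diff n y x) (diff n z x)).
Proof.
move=> H1 H2 Hn [a [b [c [k [HK [Ex [Ey Ez]]]]]]].
case: HK => [[Ha [Hb0 Hc0]] | [Ha0 HR]]; first subst b c.
- left; split; first by apply: val_inj; rewrite /= Ey Ez.
  have Exy : (x : nat) = ((y + a) %% n)%N by rewrite Ex Ey modnDml addnC.
  move: Ha; rewrite /aboveb /inW => Ha.
  have an : (a < n)%N by clear -Ha Hn; lia.
  by rewrite (diff_of (w := a)).
- subst a.
  have HR' : relK R1 R2 i b c by exact: HR.
  have /andP [Hb Hc] := relK_inW H1 H2 HR'.
  have Ey' : (y : nat) = ((x + b) %% n)%N by rewrite Ey Ex modnDml addnC.
  have Ez' : (z : nat) = ((x + c) %% n)%N by rewrite Ez Ex modnDml addnC.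
  move: Hb Hc; rewrite /inW => Hb Hc.
  have bn : (b < n)%N by clear -Hb Hn; lia.
  have cn : (c < n)%N by clear -Hc Hn; lia.
  have Db : diff n y x = b by apply: diff_of.
  have Dc : diff n z x = c by apply: diff_of.
  right; rewrite /aboveb Db Dc /inW; split; first exact: Hb; split; first exact: Hc.
  exact: HR'.
Qed.

Definition good n m (R1 R2 : rel nat) (T : int * int -> 'I_n) :=
  forall s (i : nat), (1 <= i <= 4)%N ->
      @Sset n m R1 R2 i (T s) (T (vadd s (u i))) (T (vadd s (u i.+1))).

Ltac peq := rewrite /vadd ?u1E ?u2E ?u3E ?u4E ?u5E ?e1E ?e2E /=; congr (_,_); ring.

Lemma opp_dir (s : int * int) i : (1 <= i <= 4)%N ->
  exists2 j, (1 <= j <= 4)%N & vadd (vadd s (u i)) (u j) = s.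
Proof.
case: s => a b.
case: i => [|[|[|[|[|i]]]]] //= _; [exists 3%N|exists 4%N|exists 1%N|exists 2%N] => //; peq.
Qed.

Lemma shift_inv (P : int * int -> bool) (v : int * int) :
  (forall s, P (vadd s v) = P s) -> forall (z : int) s, P (vadd s (z * v.1, z * v.2)) = P s.
Proof.
move=> H.
have pos : forall k : nat, forall s, P (vadd s (k%:Z * v.1, k%:Z * v.2)) = P s.
  elim=> [|k IH] s.
    have -> : vadd s (0%:Z * v.1, 0%:Z * v.2) = s by case: s => a b; peq.
    by [].
  have -> : vadd s (k.+1%:Z * v.1, k.+1%:Z * v.2) = vadd (vadd s (k%:Z * v.1, k%:Z * v.2)) v.
    by case: s => a b; peq.
  by rewrite H IH.
have neg : forall k : nat, forall s, P (vadd s (- (k%:Z * v.1), - (k%:Z * v.2))) = P s.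
  elim=> [|k IH] s.
    have -> : vadd s (- (0%:Z * v.1), - (0%:Z * v.2)) = s by case: s => a b; peq.
    by [].
  rewrite -H.
  have -> : vadd (vadd s (- (k.+1%:Z * v.1), - (k.+1%:Z * v.2))) v = vadd s (- (k%:Z * v.1), - (k%:Z * v.2)).
    by case: s => a b; peq.
  by rewrite IH.
case=> k s; first exact: pos.
have -> : vadd s (Negz k * v.1, Negz k * v.2) = vadd s (- (k.+1%:Z * v.1), - (k.+1%:Z * v.2)).
  by congr (vadd s (_, _)); rewrite NegzE; ring.
exact: neg.
Qed.


Lemma trip n m (R1 R2 : rel nat) (T : int * int -> 'I_n) :
  (forall a b, R1 a b -> inW m a && inW m b) ->
  (forall a b, R2 a b -> inW m a && inW m b) ->
  (2 * m + 1 <= n)%N -> good m R1 R2 T ->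
  forall s (i : nat), (1 <= i <= 4)%N ->
  (T (vadd s (u i)) = T (vadd s (u i.+1)) /\ aboveb m (T s) (T (vadd s (u i)))) \/
  (aboveb m (T (vadd s (u i))) (T s) /\ aboveb m (T (vadd s (u i.+1))) (T s) /\
   relK R1 R2 i (diff n (T (vadd s (u i))) (T s)) (diff n (T (vadd s (u i.+1))) (T s))).
Proof. move=> H1 H2 Hn HT s i Hi; exact: Sset_cases H1 H2 Hn (HT s i Hi). Qed.

Definition hi n m (T : int * int -> 'I_n) s := aboveb m (T s) (T (vadd s (u 1))).

Lemma hi_all n m (R1 R2 : rel nat) (T : int * int -> 'I_n) :
  (forall a b, R1 a b -> inW m a && inW m b) ->
  (forall a b, R2 a b -> inW m a && inW m b) ->
  (2 * m + 1 <= n)%N -> good m R1 R2 T ->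
  forall s, hi m T s -> forall i, (1 <= i <= 4)%N ->
    aboveb m (T s) (T (vadd s (u i))) /\ T (vadd s (u i)) = T (vadd s (u 1)).
Proof.
move=> H1 H2 Hn HT s h.
have tr := trip H1 H2 Hn HT s.
have A := @above_antisym n m _ _ Hn.
case: (tr 1%N erefl) => [[E1 a1] | [b1 _]]; last by case: (A _ _ h b1).
case: (tr 2%N erefl) => [[E2 a2] | [b2 _]]; last by rewrite -E1 in b2; case: (A _ _ a1 b2).
case: (tr 3%N erefl) => [[E3 a3] | [b3 _]]; last by rewrite -E2 -E1 in b3; case: (A _ _ a1 b3).
case=> [|[|[|[|[|i]]]]] Hi; try discriminate Hi.
- by split.
- by rewrite -E1.
- by rewrite -E2 -E1.
- by rewrite -E3 -E2 -E1.
Qed.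

Lemma lo_all n m (R1 R2 : rel nat) (T : int * int -> 'I_n) :
  (forall a b, R1 a b -> inW m a && inW m b) ->
  (forall a b, R2 a b -> inW m a && inW m b) ->
  (2 * m + 1 <= n)%N -> good m R1 R2 T ->
  forall s, ~~ hi m T s -> forall i, (1 <= i <= 4)%N ->
  (aboveb m (T (vadd s (u i))) (T s) /\ aboveb m (T (vadd s (u i.+1))) (T s) /\
   relK R1 R2 i (diff n (T (vadd s (u i))) (T s)) (diff n (T (vadd s (u i.+1))) (T s))).
Proof.
move=> H1 H2 Hn HT s h.
have tr := trip H1 H2 Hn HT s.
have A := @above_antisym n m _ _ Hn.
have D1 : aboveb m (T (vadd s (u 1))) (T s) /\ aboveb m (T (vadd s (u 2))) (T s) /\
   relK R1 R2 1 (diff n (T (vadd s (u 1))) (T s)) (diff n (T (vadd s (u 2))) (T s)).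
  by case: (tr 1%N erefl) => [[E1 a1] | //]; rewrite /hi a1 in h.
have D2 : aboveb m (T (vadd s (u 2))) (T s) /\ aboveb m (T (vadd s (u 3))) (T s) /\
   relK R1 R2 2 (diff n (T (vadd s (u 2))) (T s)) (diff n (T (vadd s (u 3))) (T s)).
  by case: (tr 2%N erefl) => [[E a] | //]; case: (A _ _ a D1.2.1).
have D3 : aboveb m (T (vadd s (u 3))) (T s) /\ aboveb m (T (vadd s (u 4))) (T s) /\
   relK R1 R2 3 (diff n (T (vadd s (u 3))) (T s)) (diff n (T (vadd s (u 4))) (T s)).
  by case: (tr 3%N erefl) => [[E a] | //]; case: (A _ _ a D2.2.1).
have D4 : aboveb m (T (vadd s (u 4))) (T s) /\ aboveb m (T (vadd s (u 5))) (T s) /\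
   relK R1 R2 4 (diff n (T (vadd s (u 4))) (T s)) (diff n (T (vadd s (u 5))) (T s)).
  by case: (tr 4%N erefl) => [[E a] | //]; case: (A _ _ a D3.2.1).
by case=> [|[|[|[|[|i]]]]] Hi; try discriminate Hi.
Qed.

Lemma flip n m (R1 R2 : rel nat) (T : int * int -> 'I_n) :
  (forall a b, R1 a b -> inW m a && inW m b) ->
  (forall a b, R2 a b -> inW m a && inW m b) ->
  (2 * m + 1 <= n)%N -> good m R1 R2 T ->
  forall s i, (1 <= i <= 4)%N -> hi m T (vadd s (u i)) = ~~ hi m T s.
Proof.
move=> H1 H2 Hn HT s i Hi.
have A := @above_antisym n m _ _ Hn.
have [j Hj Ej] := opp_dir s Hi.
case hs: (hi m T s) => /=.
- have a := (hi_all H1 H2 Hn HT hs Hi).1.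
  apply/negP => ht.
  have b := (hi_all H1 H2 Hn HT ht Hj).1.
  rewrite Ej in b; exact: A _ _ a b.
- have a := (lo_all H1 H2 Hn HT (negbT hs) Hi).1.
  apply/negPn/negP => ht.
  have b := (lo_all H1 H2 Hn HT ht Hj).1.
  rewrite Ej in b; exact: A _ _ a b.
Qed.

Definition psi (base p : int * int) := vadd base (p.1 - p.2, - p.1 - p.2).
Definition low (base p : int * int) := vadd (psi base p) (u 4).

Lemma relK1 (R1 R2 : rel nat) p q : relK R1 R2 1 p q = R1 q p. Proof. by []. Qed.
Lemma relK2 (R1 R2 : rel nat) p q : relK R1 R2 2 p q = R2 p q. Proof. by []. Qed.

Lemma backward n m (R1 R2 : rel nat) :
  (forall a b, R1 a b -> inW m a && inW m b) ->
  (forall a b, R2 a b -> inW m a && inW m b) ->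
  (2 * m + 1 <= n)%N ->
  cyclic_triomino_solvable n m R1 R2 -> domino_solvable m R1 R2.
Proof.
move=> H1 H2 Hn [T HT].
have fl := flip H1 H2 Hn HT.
have ha := hi_all H1 H2 Hn HT.
have la := lo_all H1 H2 Hn HT.
pose base : int * int := if hi m T (0, 0) then (0, 0) else vadd (0, 0) (u 1).
have hb : hi m T base.
  rewrite /base; case h0 : (hi m T (0, 0)) => //.
  by rewrite fl // h0.
have inv1 : forall s, hi m T (vadd s (1, -1)) = hi m T s.
  move=> s; have -> : vadd s (1, -1) = vadd (vadd s (u 1)) (u 4) by case: s => a b; peq.
  by rewrite fl // fl // negbK.
have inv2 : forall s, hi m T (vadd s (-1, -1)) = hi m T s.
  move=> s; have -> : vadd s (-1, -1) = vadd (vadd s (u 3)) (u 4) by case: s => a b; peq.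
  by rewrite fl // fl // negbK.
have hpsi : forall p, hi m T (psi base p).
  move=> p.
  pose v1 : int * int := (1, -1); pose v2 : int * int := (-1, -1).
  have -> : psi base p = vadd (vadd base (p.1 * v1.1, p.1 * v1.2))
                               (p.2 * v2.1, p.2 * v2.2).
    by rewrite /psi /v1 /v2; move: (base) p => [a b] [c d]; peq.
  by rewrite (shift_inv inv2) (shift_inv inv1).
have hlow : forall p, ~~ hi m T (low base p) by move=> p; rewrite /low fl // hpsi.
exists (fun p => diff n (T (psi base p)) (T (low base p))).
have E2 : forall p, vadd (low base p) (u 2) = psi base p.
  by move=> p; rewrite /low /psi; move: (base) p => [a b] [c d]; peq.
have E1 : forall p, vadd (low base p) (u 1) = psi base (vadd p (e 1)).
  by move=> p; rewrite /low /psi; move: (base) p => [a b] [c d]; peq.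
have E3 : forall p, vadd (low base p) (u 3) = psi base (vadd p (e 2)).
  by move=> p; rewrite /low /psi; move: (base) p => [a b] [c d]; peq.
have L1 : forall p, T (low base (vadd p (e 1))) = T (low base p).
  move=> p.
  have -> : low base p = vadd (psi base (vadd p (e 1))) (u 3).
    by rewrite /low /psi; move: (base) p => [a b] [c d]; peq.
  rewrite /low (ha _ (hpsi _) 3%N erefl).2.
  by rewrite (ha _ (hpsi _) 4%N erefl).2.
have L2 : forall p, T (low base (vadd p (e 2))) = T (low base p).
  move=> p.
  have -> : low base p = vadd (psi base (vadd p (e 2))) (u 1).
    by rewrite /low /psi; move: (base) p => [a b] [c d]; peq.
  by rewrite /low (ha _ (hpsi _) 4%N erefl).2.
split; [|split].
- move=> p; have := (la _ (hlow p) 1%N erefl).2.1.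
  by rewrite E2.
- move=> p; have := (la _ (hlow p) 1%N erefl).2.2.
  by rewrite relK1 E2 E1 L1.
- move=> p; have := (la _ (hlow p) 2%N erefl).2.2.
  by rewrite relK2 E2 E3 L2.
Qed.

Lemma sset_L n m (R1 R2 : rel nat) i (x y z : 'I_n) w :
  inW m w -> (x : nat) = w -> (y : nat) = 0%N -> (z : nat) = 0%N -> Sset m R1 R2 i x y z.
Proof.
move=> Hw Ex Ey Ez; exists w, 0%N, 0%N, 0%N.
have wn : (w < n)%N by rewrite -Ex ltn_ord.
split; first by left.
by rewrite Ex Ey Ez addn0 mod0n modn_small.
Qed.

Lemma sset_D n m (R1 R2 : rel nat) i (x y z : 'I_n) b c :
  relK R1 R2 i b c -> (x : nat) = 0%N -> (y : nat) = b -> (z : nat) = c -> Sset m R1 R2 i x y z.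
Proof.
move=> HR Ex Ey Ez; exists 0%N, b, c, 0%N.
have bn : (b < n)%N by rewrite -Ey ltn_ord.
have cn : (c < n)%N by rewrite -Ez ltn_ord.
split; first by right; split; [done | exact: HR].
by rewrite Ex Ey Ez !addn0 mod0n !modn_small.
Qed.

Lemma forward n m (R1 R2 : rel nat) :
  (2 * m + 1 <= n)%N ->
  domino_solvable m R1 R2 -> cyclic_triomino_solvable n m R1 R2.
Proof.
case: n => [|n'] Hn; first by move: Hn; rewrite addn1.
move=> [D [HW [HD1 HD2]]].
pose hc (s : int * int) : bool := modz (s.1 - s.2 - 1) 2 == 0.
pose phi (s : int * int) : int * int := (divz (s.1 - s.2 - 1) 2, divz (1 - s.1 - s.2) 2).
pose T (s : int * int) : 'I_n'.+1 := if hc s then inord (D (phi s)) else ord0.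
have Dn : forall p, (D p < n'.+1)%N.
  by move=> p; have := HW p; rewrite /inW; lia.
have Thi : forall s, hc s -> (T s : nat) = D (phi s).
  by move=> s h; rewrite /T h inordK.
have Tlo : forall s, ~~ hc s -> (T s : nat) = 0%N.
  by move=> s h; rewrite /T (negbTE h).
exists T => -[x y] i Hi.
case: i Hi => [|[|[|[|[|i]]]]] Hi; try discriminate Hi;
  rewrite ?u1E ?u2E ?u3E ?u4E ?u5E /vadd /=;
  (case hs: (hc (x, y)); [apply: (@sset_L _ _ _ _ _ _ _ _ (D (phi (x, y)))) ;
      [ exact: HW | exact: Thi | apply: Tlo; move: hs; rewrite /hc /=; lia
      | apply: Tlo; move: hs; rewrite /hc /=; lia ] | ]).
- apply: (@sset_D _ _ _ _ _ _ _ _ (D (phi (x + 1, y + 0))) (D (phi (x + 0, y + 1)))).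
  + rewrite relK1.
    have -> : phi (x + 1, y + 0) = vadd (phi (x + 0, y + 1)) (e 1).
      move: hs; rewrite /hc /phi /vadd e1E /=; move/negbT => hs; congr (_, _); lia.
    exact: HD1.
  + by apply: Tlo; rewrite hs.
  + by apply: Thi; move: hs; rewrite /hc /=; lia.
  + by apply: Thi; move: hs; rewrite /hc /=; lia.
- apply: (@sset_D _ _ _ _ _ _ _ _ (D (phi (x + 0, y + 1))) (D (phi (x + -1, y + 0)))).
  + rewrite relK2.
    have -> : phi (x + -1, y + 0) = vadd (phi (x + 0, y + 1)) (e 2).
      move: hs; rewrite /hc /phi /vadd e2E /=; move/negbT => hs; congr (_, _); lia.
    exact: HD2.
  + by apply: Tlo; rewrite hs.
  + by apply: Thi; move: hs; rewrite /hc /=; lia.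
  + by apply: Thi; move: hs; rewrite /hc /=; lia.
- apply: (@sset_D _ _ _ _ _ _ _ _ (D (phi (x + -1, y + 0))) (D (phi (x + 0, y + -1)))).
  + rewrite /relK /=.
    have -> : phi (x + 0, y + -1) = vadd (phi (x + -1, y + 0)) (e 1).
      move: hs; rewrite /hc /phi /vadd e1E /=; move/negbT => hs; congr (_, _); lia.
    exact: HD1.
  + by apply: Tlo; rewrite hs.
  + by apply: Thi; move: hs; rewrite /hc /=; lia.
  + by apply: Thi; move: hs; rewrite /hc /=; lia.
- apply: (@sset_D _ _ _ _ _ _ _ _ (D (phi (x + 0, y + -1))) (D (phi (x + 1, y + 0)))).
  + rewrite /relK /=.
    have -> : phi (x + 0, y + -1) = vadd (phi (x + 1, y + 0)) (e 2).
      move: hs; rewrite /hc /phi /vadd e2E /=; move/negbT => hs; congr (_, _); lia.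
    exact: HD2.
  + by apply: Tlo; rewrite hs.
  + by apply: Thi; move: hs; rewrite /hc /=; lia.
  + by apply: Thi; move: hs; rewrite /hc /=; lia.
Qed.

Theorem lemma3p5 (m n : nat) (R1 R2 : rel nat) :
  (1 <= m)%N ->
  (forall a b, R1 a b -> inW m a && inW m b) ->
  (forall a b, R2 a b -> inW m a && inW m b) ->
  (2 * m + 1 <= n)%N ->
  cyclic_triomino_solvable n m R1 R2 <-> domino_solvable m R1 R2.
Proof.
move=> _ H1 H2 Hn; split; [exact: backward | exact: forward].
Qed.
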